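(* Let $t\geq 1$ and let $M$ be a subset of $\mathbb{F}_2^t\setminus\{0\}$ with $|M|\geq t+1$. Let $H_M$ be the $t\times |M|$ matrix whose columns are the elements of $M$ (written as column vectors, in some fixed order), and let $C_M=\{v\in\mathbb{F}_2^{|M|} : H_M v^{T}=0\}$ be the associated code, a binary linear code of length $|M|$, dimension $k$ and minimum distance $d$. (a) If $M$ is sum-free and $|M|\geq s_{\max}(t)$, then $d=4$ and $M$ is not Sidon. (b) If $M$ is sum-free and Sidon and $|M|\geq s_{\max}(t-1)$, then $k=|M|-t$ and $H_M$ is a parity check matrix of $C_M$ (i.e. has rank $t$). (c) If $M$ is sum-free and Sidon and $|M|\geq s_{\max}(t-1)+1$, then $d = 5$.
   Context: $\mathbb{F}_2^t$ is the $t$-dimensional vector space over $\mathbb{F}_2$. A subset $M\subseteq \mathbb{F}_2^t$ is Sidon if $m_1+m_2\neq m_3+m_4$ for all pairwise distinct $m_1,m_2,m_3,m_4\in M$; it is sum-free if $m_1+m_2\neq m_3$ for all $m_1,m_2,m_3\in M$ (not necessarily distinct). $s_{\max}(t)$ denotes the maximum size of a Sidon set in $\mathbb{F}_2^t$ (so $s_{\max}(0)=1$). The minimum distance of a binary linear code is the minimum Hamming weight of its nonzero codewords. *)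

(* Defs.v *)
From HB Require Import structures.
From mathcomp Require Import all_boot all_order all_algebra.
Set Implicit Arguments. Unset Strict Implicit. Unset Printing Implicit Defensive.
Import GRing.Theory.
Local Open Scope ring_scope.

Notation vecF2 t := 'cV['F_2]_t.

Definition sidon t (M : {set vecF2 t}) : bool :=
  [forall m1 in M, forall m2 in M, forall m3 in M, forall m4 in M,
    [&& m1 != m2, m1 != m3, m1 != m4, m2 != m3, m2 != m4 & m3 != m4]
      ==> (m1 + m2 != m3 + m4)].

Definition sum_free t (M : {set vecF2 t}) : Prop :=
  forall m1 m2 m3, m1 \in M -> m2 \in M -> m3 \in M -> m1 + m2 != m3.

Definition s_max (t : nat) : nat :=
  \max_(S : {set vecF2 t} | sidon S) #|S|.

Definition H_of t (M : {set vecF2 t}) : 'M['F_2]_(t, #|M|) :=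
  \matrix_(i < t, j < #|M|) (enum_val j : vecF2 t) i 0.

Definition code_of t (M : {set vecF2 t}) : {set 'rV['F_2]_#|M|} :=
  [set v | H_of M *m v^T == 0].

(* Dimension of C_M: C_M is the (left) kernel of H_M^T, i.e. the row space
   of kermx (H_M^T); its dimension is the rank of that matrix. *)
Definition code_dim t (M : {set vecF2 t}) : nat := \rank (kermx (H_of M)^T).

Definition wt n (v : 'rV['F_2]_n) : nat := #|[set j : 'I_n | v 0 j != 0]|.

Definition is_min_dist n (C : {set 'rV['F_2]_n}) (d : nat) : Prop :=
  (exists2 c, c \in C & (c != 0%R) && (wt c == d)) /\
  (forall c, c \in C -> c != 0%R -> (d <= wt c)%N).

(* Main.v *)
Require Import Defs.
From HB Require Import structures.
From mathcomp Require Import all_boot all_order all_algebra.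
From Stdlib Require Classical_Prop.
Set Implicit Arguments. Unset Strict Implicit. Unset Printing Implicit Defensive.
Import GRing.Theory.
Local Open Scope ring_scope.

Lemma F2_cases (a : 'F_2) : a = 0 \/ a = 1.
Proof. case: a => [[|[|n]]] // Hn; [left|right]; exact: val_inj. Qed.

Lemma F2_addxx (a : 'F_2) : a + a = 0.
Proof. by case: (F2_cases a) => ->; [rewrite addr0 | apply: val_inj]. Qed.

Lemma addxx m n (x : 'M['F_2]_(m,n)) : x + x = 0.
Proof. by apply/matrixP => i j; rewrite !mxE F2_addxx. Qed.

Lemma oppF m n (x : 'M['F_2]_(m,n)) : - x = x.
Proof. by apply/eqP; rewrite eq_sym -subr_eq0 opprK addxx. Qed.

Lemma sum0E m n (x y : 'M['F_2]_(m,n)) : (x + y == 0) = (x == y).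
Proof. by rewrite addr_eq0 oppF. Qed.

Lemma F2_neq0 (a : 'F_2) : a != 0 -> a = 1.
Proof. by case: (F2_cases a) => ->; rewrite ?eqxx. Qed.

Lemma oneF2 : (1 : 'F_2) != 0. Proof. exact: oner_neq0. Qed.

Section S.
Variables (t : nat) (M : {set 'cV['F_2]_t}).

Lemma mul_code (v : 'rV['F_2]_#|M|) :
  H_of M *m v^T = \sum_(j | v 0 j != 0) (enum_val j : 'cV_t).
Proof.
apply/matrixP => i k; rewrite ord1 !mxE summxE [RHS]big_mkcond /=.
apply: eq_bigr => j _; rewrite !mxE.
case: (F2_cases (v 0 j)) => ->; rewrite ?eqxx ?mulr0 ?mulr1 //.
Qed.

Definition zs k := exists s : seq 'cV['F_2]_t,
  [/\ uniq s, size s = k, all (mem M) s & \sum_(x <- s) x = 0].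

Lemma code_zs (c : 'rV['F_2]_#|M|) : c \in code_of M -> zs (wt c).
Proof.
rewrite inE mul_code => /eqP H.
exists [seq enum_val j | j <- enum [set j | c 0 j != 0]]; split.
- by rewrite map_inj_uniq ?enum_uniq //; apply: enum_val_inj.
- by rewrite size_map /wt [in RHS]cardE.
- by apply/allP => x /mapP [j _ ->]; apply: enum_valP.
- by rewrite big_map big_enum /=; under eq_bigl do rewrite inE; exact: H.
Qed.

Lemma wt_pos (c : 'rV['F_2]_#|M|) : c != 0 -> (0 < wt c)%N.
Proof.
move=> cn0; rewrite /wt card_gt0; apply/set0Pn.
have [j Hj] : exists j, c 0 j != 0.
  apply/existsP; apply: contraR cn0 => /existsPn H; apply/eqP/rowP => j.
  by move: (H j); rewrite negbK mxE => /eqP.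
by exists j; rewrite inE.
Qed.

Lemma zs_code k : (0 < k)%N -> zs k -> exists2 c, c \in code_of M & (c != 0) && (wt c == k).
Proof.
move=> k0 [s [us sz alls sm]].
pose c : 'rV['F_2]_#|M| := \row_j ((enum_val j \in s)%:R).
have cE j : (c 0 j != 0) = (enum_val j \in s).
  by rewrite mxE; case: (enum_val j \in s); rewrite ?eqxx ?oneF2.
have imE : enum_val @: [set j | c 0 j != 0] = [set x in s].
  apply/setP => x; rewrite inE; apply/imsetP/idP.
    by case=> j; rewrite inE cE => ? ->.
  move=> xs; have xM : x \in M by move/allP: alls => /(_ x xs).
  exists (enum_rank_in xM x); last by rewrite enum_rankK_in.
  by rewrite inE cE enum_rankK_in.
have wE : wt c = size s.
  rewrite /wt -(card_imset _ (@enum_val_inj _ _)) imE.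
  by rewrite cardsE; apply/card_uniqP.
exists c.
  rewrite inE mul_code; apply/eqP.
  rewrite (eq_bigl (mem [set j | c 0 j != 0])); last by move=> j; rewrite !inE.
  rewrite -(big_imset id (in2W (@enum_val_inj _ _))) /= imE.
  rewrite (eq_bigl (mem s)); last by move=> x; rewrite !inE.
  by rewrite -big_uniq.
rewrite wE sz eqxx andbT; apply/eqP => c0.
have w0 : wt (0 : 'rV['F_2]_#|M|) = 0%N.
  by rewrite /wt; apply/eqP; rewrite cards_eq0; apply/eqP/setP => j; rewrite !inE mxE eqxx.
by move: wE; rewrite c0 w0 sz => k0'; rewrite -k0' in k0.
Qed.

Lemma min_dist d : (0 < d)%N -> zs d -> (forall k, (0 < k < d)%N -> ~ zs k) ->
  is_min_dist (code_of M) d.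
Proof.
move=> d0 zd H; split; first exact: zs_code.
move=> c cC cn0; rewrite leqNgt; apply/negP => lt.
by apply: (H (wt c)); [rewrite wt_pos | apply: code_zs].
Qed.

End S.

Lemma sidonP n (S : {set 'cV['F_2]_n}) :
  reflect (forall m1 m2 m3 m4, m1 \in S -> m2 \in S -> m3 \in S -> m4 \in S ->
     [&& m1 != m2, m1 != m3, m1 != m4, m2 != m3, m2 != m4 & m3 != m4] ->
     m1 + m2 != m3 + m4) (sidon S).
Proof.
apply: (iffP idP).
  move=> H m1 m2 m3 m4 h1 h2 h3 h4 hd.
  move/forall_inP: H => /(_ m1 h1) /forall_inP /(_ m2 h2) /forall_inP /(_ m3 h3)
    /forall_inP /(_ m4 h4) /implyP; exact.
move=> H; apply/forall_inP => m1 h1; apply/forall_inP => m2 h2.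
apply/forall_inP => m3 h3; apply/forall_inP => m4 h4; apply/implyP; exact: H.
Qed.

Lemma smax_ge n (S : {set 'cV['F_2]_n}) : sidon S -> (#|S| <= s_max n)%N.
Proof. by move=> H; rewrite /s_max; apply: (leq_bigmax_cond S H). Qed.

Lemma addS0 n (S : {set 'cV['F_2]_n}) : 0 \notin S -> sidon S ->
  (forall a b c, a \in S -> b \in S -> c \in S -> a != b -> a != c -> b != c -> a + b != c) ->
  (#|S|.+1 <= s_max n)%N.
Proof.
move=> S0 sS H; have -> : #|S|.+1 = #|0 |: S| by rewrite cardsU1 S0.
apply: smax_ge; apply/sidonP => m1 m2 m3 m4.
rewrite !in_setU1.
have Hs := sidonP _ sS.
case/orP=> [/eqP->|h1]; case/orP=> [/eqP->|h2]; case/orP=> [/eqP->|h3]; case/orP=> [/eqP->|h4];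
  rewrite ?eqxx ?andbF //= ?add0r ?addr0.
all: move=> /and3P [d1 d2 /and4P [d3 d4 d5 d6]].
- by rewrite eq_sym; apply: H; rewrite // eq_sym.
- by rewrite eq_sym; apply: H; rewrite // eq_sym.
- by apply: H; rewrite // eq_sym.
- by apply: H; rewrite // eq_sym.
- by apply: Hs; rewrite ?d1 ?d2 ?d3 ?d4 ?d5 ?d6.
Qed.

Section Proj.
Variables (n : nat) (m0 : 'cV['F_2]_n.+1) (i : 'I_n.+1).
Hypothesis Hm0 : m0 i 0 = 1.

Definition proj (x : 'cV['F_2]_n.+1) : 'cV['F_2]_n :=
  \col_j (x + x i 0 *: m0) (lift i j) 0.

Lemma projD x y : proj (x + y) = proj x + proj y.
Proof. by apply/colP => j; rewrite !mxE mulrDl addrACA. Qed.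

Lemma proj0 x : proj x = 0 -> x = 0 \/ x = m0.
Proof.
move=> H.
have y0 : x + x i 0 *: m0 = 0.
  apply/colP => k; case: (unliftP i k) => [j ->| ->].
    by move/colP: H => /(_ j); rewrite !mxE.
  by rewrite !mxE Hm0 mulr1 F2_addxx.
move/eqP: y0; rewrite sum0E => /eqP ->.
by case: (F2_cases (x i 0)) => ->; [left; rewrite scale0r | right; rewrite scale1r].
Qed.

Lemma projE x y : proj x = proj y -> x + y = 0 \/ x + y = m0.
Proof. by move=> H; apply: proj0; rewrite projD H addxx. Qed.

Lemma proj_bound (S : {set 'cV['F_2]_n.+1}) :
  (forall a, a \in S -> (a != 0) && (a != m0)) ->
  (forall a b, a \in S -> b \in S -> a != b -> a + b != m0) ->
  (forall a b c, a \in S -> b \in S -> c \in S -> a != b -> a != c -> b != c ->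
     (a + b + c != 0) && (a + b + c != m0)) ->
  (forall a b c d, a \in S -> b \in S -> c \in S -> d \in S ->
     [&& a != b, a != c, a != d, b != c, b != d & c != d] ->
     (a + b + c + d != 0) && (a + b + c + d != m0)) ->
  (#|S|.+1 <= s_max n)%N.
Proof.
move=> H1 H2 H3 H4.
have inj : {in S &, injective proj}.
  move=> a b aS bS /projE [/eqP|/eqP]; first by rewrite sum0E => /eqP.
  by have [//|ab] := eqVneq a b; rewrite (negbTE (H2 a b aS bS ab)).
have ne a b : proj a != proj b -> a != b by apply: contra => /eqP ->.
rewrite -(card_in_imset inj); apply: addS0.
- apply/imsetP => -[a aS /esym/proj0 [a0|am]].
    by move: (H1 a aS); rewrite a0 eqxx.
  by move: (H1 a aS); rewrite am eqxx andbF.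
- apply/sidonP => _ _ _ _ /imsetP [a1 h1 ->] /imsetP [a2 h2 ->] /imsetP [a3 h3 ->]
    /imsetP [a4 h4 ->] /and3P [d1 d2 /and4P [d3 d4 d5 d6]].
  rewrite -!projD; apply/eqP => /projE.
  have := H4 a1 a2 a3 a4 h1 h2 h3 h4.
  rewrite (ne _ _ d1) (ne _ _ d2) (ne _ _ d3) (ne _ _ d4) (ne _ _ d5) (ne _ _ d6) addrA.
  by move=> /(_ isT) /andP [/negP n1 /negP n2] [] /eqP.
- move=> _ _ _ /imsetP [a h1 ->] /imsetP [b h2 ->] /imsetP [c h3 ->] d1 d2 d3.
  rewrite -!projD; apply/eqP => /projE.
  have /andP [/negP n1 /negP n2] := H3 a b c h1 h2 h3 (ne _ _ d1) (ne _ _ d2) (ne _ _ d3).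
  by case=> /eqP.
Qed.
End Proj.

Section S2.
Variables (t : nat) (M : {set 'cV['F_2]_t}).
Local Notation zs := (zs M).
Lemma no_zs1 : 0 \notin M -> ~ zs 1.
Proof.
move=> M0 [[|a [|? ?]] [//= _ _ /andP [aM _]]]; rewrite big_cons big_nil addr0 => a0.
by rewrite -a0 aM in M0.
Qed.

Lemma no_zs2 : ~ zs 2.
Proof.
move=> [[|a [|b [|? ?]]] [//= u _ _]]; rewrite !big_cons big_nil addr0 => /eqP.
by rewrite sum0E => /eqP ab; move: u; rewrite ab inE eqxx.
Qed.

Lemma no_zs3 : sum_free M -> ~ zs 3.
Proof.
move=> sf [[|a [|b [|c [|? ?]]]] [//= _ _ /and4P [aM bM cM _]]].
rewrite !big_cons big_nil addr0 addrA => /eqP; rewrite sum0E => /eqP e.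
by move: (sf _ _ _ aM bM cM); rewrite e eqxx.
Qed.

Lemma no_zs4 : sidon M -> ~ zs 4.
Proof.
move=> /sidonP sS [[|a [|b [|c [|d [|? ?]]]]] [//= u _ /and5P [aM bM cM dM _]]].
rewrite !big_cons big_nil addr0 !addrA -(addrA (a + b)) => /eqP; rewrite sum0E => e.
move: u; rewrite !inE !negb_or -!andbA => u.
have := sS a b c d aM bM cM dM; rewrite e.
by rewrite andbT in u; move=> /(_ u).
Qed.

Lemma mk_zs4 a b c d : a \in M -> b \in M -> c \in M -> d \in M ->
  [&& a != b, a != c, a != d, b != c, b != d & c != d] -> a + b = c + d -> zs 4.
Proof.
move=> aM bM cM dM /and3P [d1 d2 /and4P [d3 d4 d5 d6]] e.
exists [:: a; b; c; d]; split => //=.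
- by rewrite !inE !negb_or d1 d2 d3 d4 d5 d6.
- by rewrite aM bM cM dM.
- by rewrite !big_cons big_nil addr0 !addrA -(addrA (a + b)); apply/eqP; rewrite sum0E e.
Qed.

Lemma zs4_of : ~ sidon M -> zs 4.
Proof.
move=> nS; apply: Classical_Prop.NNPP => nz; apply: nS; apply/sidonP.
move=> a b c d aM bM cM dM dd; apply/eqP => e; apply: nz; exact: mk_zs4 e.
Qed.
End S2.

Lemma spanD t (M : {set 'cV['F_2]_t}) (a b : 'cV['F_2]_t) :
  (a^T <= (H_of M)^T)%MS -> (b^T <= (H_of M)^T)%MS -> ((a + b)^T <= (H_of M)^T)%MS.
Proof. by move=> ha hb; rewrite linearD /= addmx_sub. Qed.

Lemma spanM t (M : {set 'cV['F_2]_t}) a : a \in M -> (a^T <= (H_of M)^T)%MS.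
Proof.
move=> aM; have -> : a = col (enum_rank_in aM a) (H_of M).
  by apply/colP => k; rewrite !mxE enum_rankK_in.
by rewrite tr_col row_sub.
Qed.

Unset Implicit Arguments.

Theorem theorem3p2 (t : nat) (M : {set 'cV['F_2]_t}) :
  (1 <= t)%N -> 0 \notin M -> (t.+1 <= #|M|)%N ->
  [/\ (sum_free M -> (s_max t <= #|M|)%N ->
         is_min_dist (code_of M) 4 /\ ~ sidon M),
      (sum_free M -> sidon M -> (s_max t.-1 <= #|M|)%N ->
         code_dim M = (#|M| - t)%N /\ \rank (H_of M) = t)
    & (sum_free M -> sidon M -> (s_max t.-1 < #|M|)%N ->
         is_min_dist (code_of M) 5)].
Proof.
case: t M => [//|n] M _ M0 szM.
have nz a : a \in M -> a != 0 by move=> aM; apply: contraNneq M0 => <-.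
split.
- move=> sf smax.
  have nS : ~ sidon M.
    move=> sS; have := addS0 M0 sS (fun a b c aM bM cM _ _ _ => sf a b c aM bM cM).
    by rewrite ltnNge smax.
  split=> //; apply: min_dist => //; first exact: zs4_of.
  move=> k /andP [k0 k4]; case: k k0 k4 => [|[|[|[|]]]] // _ _.
  + exact: no_zs1.
  + exact: no_zs2.
  + exact: no_zs3.
- move=> sf sS smax.
  have rk : \rank (H_of M) = n.+1.
    apply: Classical_Prop.NNPP => nr.
    have : ~~ (1%:M <= (H_of M)^T)%MS by rewrite sub1mx /row_full mxrank_tr; apply/eqP.
    case/row_subPn => i ni.
    pose m0 : 'cV['F_2]_n.+1 := (row i 1%:M)^T.
    have m0i : m0 i 0 = 1 by rewrite !mxE eqxx.
    have nsp v : (v^T <= (H_of M)^T)%MS -> v != m0.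
      by move=> h; apply: contraNneq ni => e; rewrite -[row i _]trmxK -/m0 -e.
    have := proj_bound m0i (S := M).
    have /sidonP sP := sS.
    have -> // : (#|M|.+1 <= s_max n)%N = false by rewrite ltnNge smax.
    move=> H; suff : false by []; apply: H.
    + by move=> a aM; rewrite nz //= nsp // spanM.
    + by move=> a b aM bM _; rewrite nsp // spanD // spanM.
    + move=> a b c aM bM cM ab ac bc; rewrite nsp ?spanD ?spanM // andbT.
      by rewrite sum0E; apply: sf.
    + move=> a b c d aM bM cM dM dd; rewrite nsp ?spanD ?spanM // andbT.
      by rewrite -(addrA (a + b)) sum0E; apply: sP.
  split=> //; by rewrite /code_dim mxrank_ker mxrank_tr rk.
- move=> sf sS smax.
  have /sidonP sP := sS.
  have [m0 m0M] : exists m0, m0 \in M.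
    by apply/set0Pn; rewrite -card_gt0; apply: leq_trans szM.
  have [i m0i] : exists i, m0 i 0 = 1.
    apply: Classical_Prop.NNPP => H; apply: (negP (nz _ m0M)); apply/eqP/colP => k.
    rewrite mxE; case: (F2_cases (m0 k 0)) => // h1; exfalso; apply: H; by exists k.
  apply: min_dist => //; last first.
    move=> k /andP [k0 k5]; case: k k0 k5 => [|[|[|[|[|]]]]] // _ _.
    + exact: no_zs1.
    + exact: no_zs2.
    + exact: no_zs3.
    + exact: no_zs4.
  apply: Classical_Prop.NNPP => nz5.
  have := proj_bound m0i (S := M :\ m0).
  have cM := cardsD1 m0 M; rewrite m0M add1n in cM.
  have -> // : (#|M :\ m0|.+1 <= s_max n)%N = false by rewrite -cM leqNgt smax.
  move=> H; suff : false by []; apply: H.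
  + by move=> a; rewrite !inE => /andP [-> aM]; rewrite nz.
  + move=> a b; rewrite !inE => /andP [am aM] /andP [bm bM] _; exact: sf.
  + move=> a b c; rewrite !inE => /andP [am aM] /andP [bm bM] /andP [cm cM'] ab ac bc.
    apply/andP; split; first by rewrite sum0E; apply: sf.
    apply/eqP => e.
    have e2 : a + b = c + m0 by apply/eqP; rewrite -sum0E addrA e addxx.
    by move: (sP a b c m0 aM bM cM' m0M); rewrite ab ac am bc bm cm e2 eqxx => /(_ isT).
  + move=> a b c d; rewrite !inE => /andP [am aM] /andP [bm bM] /andP [cm cM'] /andP [dm dM] dd.
    rewrite -(addrA (a + b)) sum0E sP //=; rewrite addrA.
    apply/eqP => e; apply: nz5; exists [:: a; b; c; d; m0]; split => //=.
    * move: dd => /and3P [d1 d2 /and4P [d3 d4 d5 d6]].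
      by rewrite !inE !negb_or d1 d2 d3 d4 d5 d6 am bm cm dm !andbT.
    * by rewrite aM bM cM' dM m0M.
    * by rewrite !big_cons big_nil addr0 !addrA e addxx.
Qed.
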